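(* Let $\mathcal{F}^*=\{f\in\bar{\mathcal{F}} : \mathbb{E}_{\theta}[f(Z)]\le C \text{ for all }\theta\in\Theta_0\}$ (the rescaled set $C\cdot\mathcal{E}$ of all $e$-values, within the ambient class), and let $\mathcal{F}'\subseteq\bar{\mathcal{F}}$ be any incentive-aligned menu; assume the attainment assumption holds for both. Assume that for each $\theta\in\Theta_1$ the map $L\mapsto u(\theta,L)$ is affine on $[0,\infty)$. Then for every probability distribution $Q$ on $\Theta$, $$U(Q,\mathcal{F}^* )\ \ge\ U(Q,\mathcal{F}'),$$ regardless of which maximizers the agents select as best responses.
   Context: Let $\Theta$ be a set of types partitioned as $\Theta=\Theta_0\sqcup\Theta_1$ (null and nonnull types), and let $(P_\theta)_{\theta\in\Theta}$ be probability distributions on a measurable space $\mathcal{Z}$; $\mathbb{E}_\theta$ denotes expectation with $Z\sim P_\theta$. Fix a cost $C>0$. Fix an ambient class $\bar{\mathcal{F}}$ of measurable functions $f:\mathcal{Z}\to[0,\infty)$ (''license functions'') with $\mathbb{E}_\theta[f(Z)]<\infty$ for all $\theta$. A menu is a subset $\mathcal{F}\subseteq\bar{\mathcal{F}}$; the attainment assumption for $\mathcal{F}$ means that for every $\theta$, $\sup_{f\in\mathcal{F}}\mathbb{E}_\theta[f(Z)]$ is attained when $\mathcal{F}\ne\emptyset$. Agent behavior: an agent of type $\theta$ offered $\mathcal{F}$ opts in ($I=1$) iff $\mathcal{F}\neq\emptyset$ and $\max_{f\in\mathcal{F}}\mathbb{E}_\theta[f(Z)]>C$, in which case it selects some maximizer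 $f^{\mathrm{br}}(\cdot;\theta,\mathcal{F})\in\arg\max_{f\in\mathcal{F}}\mathbb{E}_\theta[f(Z)]$; otherwise it opts out ($I=0$). The realized license is $L=f^{\mathrm{br}}(Z;\theta,\mathcal{F})$ with $Z\sim P_\theta$. The principal's utility is a function $u:\Theta\times[0,\infty)\to\mathbb{R}$ such that: for $\theta\in\Theta_1$, $u(\theta,\cdot)$ is nondecreasing and $u(\theta,L)\ge 0$; for $\theta\in\Theta_0$, $u(\theta,\cdot)$ is nonincreasing, $u(\theta,0)\le0$ and $u(\theta,L)<0$ for all $L>0$. For a probability distribution $Q$ on $\Theta$, $U(Q,\mathcal{F})=\mathbb{E}_{\theta\sim Q}\big[\mathbb{E}_{Z\sim P_\theta}[u(\theta,L)\cdot I\mid\theta]\big]$. A menu $\mathcal{F}$ is incentive-aligned if $\mathbb{E}_\theta[f(Z)]\le C$ for all $\theta\in\Theta_0$ and all $f\in\mathcal{F}$. An $e$-value is a measurable $g\ge 0$ with $\mathbb{E}_\theta[g(Z)]\le 1$ for all $\theta\in\Theta_0$, and $\mathcal{E}$ is the set of $e$-values. *)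

(* Defs.v *)
From HB Require Import structures.
From mathcomp Require Import all_boot all_order all_algebra.
From mathcomp Require Import all_classical all_reals all_analysis.
Set Implicit Arguments. Unset Strict Implicit. Unset Printing Implicit Defensive.
Import Order.TTheory GRing.Theory Num.Theory.
Local Open Scope classical_set_scope.
Local Open Scope ring_scope.
Local Open Scope ereal_scope.

Section Defs.
Context (R : realType) (dZ : measure_display) (Z : measurableType dZ)
        (Theta : Type) (P : Theta -> probability Z R).

Definition Ex (th : Theta) (f : Z -> R) : \bar R := \int[P th]_z (f z)%:E.

Definition attains (F : set (Z -> R)) : Prop :=
  forall th, F !=set0 ->
    exists2 f, F f & forall g, F g -> Ex th g <= Ex th f.

Definition opts_in (C : R) (th : Theta) (F : set (Z -> R)) : Prop :=
  F !=set0 /\ C%:E < ereal_sup [set Ex th f | f in F].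

Definition I_opt (C : R) (th : Theta) (F : set (Z -> R)) : R :=
  \1_[set t | opts_in C t F] th.

Definition best_response (C : R) (F : set (Z -> R)) (br : Theta -> Z -> R)
  : Prop :=
  forall th, opts_in C th F ->
    F (br th) /\ forall g, F g -> Ex th g <= Ex th (br th).

Definition incentive_aligned (C : R) (Theta0 : set Theta)
  (F : set (Z -> R)) : Prop :=
  forall th f, Theta0 th -> F f -> Ex th f <= C%:E.

Definition Fstar (C : R) (Theta0 : set Theta) (Fbar : set (Z -> R))
  : set (Z -> R) :=
  [set f | Fbar f /\ forall th, Theta0 th -> Ex th f <= C%:E].

End Defs.

Definition Uprin (R : realType) (dZ : measure_display) (Z : measurableType dZ)
  (dT : measure_display) (Theta : measurableType dT)
  (P : Theta -> probability Z R) (C : R) (u : Theta -> R -> R)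
  (Q : probability Theta R) (F : set (Z -> R)) (br : Theta -> Z -> R)
  : \bar R :=
  \int[Q]_th (\int[P th]_z (u th (br th z) * I_opt P C th F)%:E).

(* Main.v *)
Require Import Defs.
From HB Require Import structures.
From mathcomp Require Import all_boot all_order all_algebra.
From mathcomp Require Import all_classical all_reals all_analysis.
Import Order.TTheory GRing.Theory Num.Theory.
Local Open Scope classical_set_scope.
Local Open Scope ring_scope.
Local Open Scope ereal_scope.

Lemma int_mono d (T : measurableType d) (R : realType) (mu : measure T R) (f g : T -> \bar R) :
 (forall x, f x <= g x) -> \int[mu]_x f x <= \int[mu]_x g x.
Proof.
move=> fg; rewrite /integral /= !patch_setT.
apply: leeB; apply: le_ereal_sup => _ [h hf <-]; exists h => //= x; apply: le_trans (hf x) _.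
  by rewrite !funeposE le_max2.
by rewrite !funenegE le_max2 // leeN2.
Qed.

Theorem theorem2p4 (R : realType) (dZ : measure_display) (Z : measurableType dZ)
  (dT : measure_display) (Theta : measurableType dT)
  (P : Theta -> probability Z R) (Theta0 : set Theta) (C : R) (hC : (0 < C)%R)
  (Fbar : set (Z -> R))
  (hFbar : forall f, Fbar f ->
     [/\ measurable_fun setT f, (forall z, (0 <= f z)%R) &
         forall th, (P th).-integrable setT (EFin \o f)])
  (u : Theta -> R -> R)
  (hu1 : forall th, ~ Theta0 th ->
     (forall x y, (0 <= x)%R -> (x <= y)%R -> (u th x <= u th y)%R) /\
     (forall L, (0 <= L)%R -> (0 <= u th L)%R))
  (hu0 : forall th, Theta0 th ->
     [/\ (forall x y, (0 <= x)%R -> (x <= y)%R -> (u th y <= u th x)%R),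
         (u th 0 <= 0)%R &
         (forall L, (0 < L)%R -> (u th L < 0)%R)])
  (F' : set (Z -> R)) (hF'sub : F' `<=` Fbar)
  (hF'ia : incentive_aligned P C Theta0 F')
  (hattS : attains P (Fstar P C Theta0 Fbar))
  (hatt' : attains P F')
  (haff : forall th, ~ Theta0 th ->
     exists a b : R, forall L, (0 <= L)%R -> u th L = (a + b * L)%R)
  (Q : probability Theta R)
  (brS br' : Theta -> Z -> R)
  (hbrS : best_response P C (Fstar P C Theta0 Fbar) brS)
  (hbr' : best_response P C F' br') :
  Uprin P C u Q F' br' <= Uprin P C u Q (Fstar P C Theta0 Fbar) brS.
Proof.
set FS := Fstar P C Theta0 Fbar.
have F'S : F' `<=` FS.
  by move=> f hf; split; [exact: hF'sub|move=> th h0; exact: hF'ia].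
have I0 : forall th F, ~ opts_in P C th F -> I_opt P C th F = 0%R.
  by move=> th F h; rewrite /I_opt indicE memNset.
have I1 : forall th F, opts_in P C th F -> I_opt P C th F = 1%R.
  by move=> th F h; rewrite /I_opt indicE mem_set.
have int0 : forall th F (br : Theta -> Z -> R), ~ opts_in P C th F ->
    \int[P th]_z (u th (br th z) * I_opt P C th F)%:E = 0.
  move=> th F br h; rewrite I0 //; apply: integral0_eq => z _.
  by rewrite mulr0.
apply: int_mono => th.
have [hin'|hout'] := pselect (opts_in P C th F'); last first.
  rewrite int0 //; apply: integral_ge0 => z _; rewrite lee_fin.
  have [hinS|houtS] := pselect (opts_in P C th FS); last by rewrite I0 // mulr0.
  rewrite I1 // mulr1.
  have [h0|h0] := pselect (Theta0 th).
    exfalso; move: hinS => [_]; apply/negP; rewrite -leNgt.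
    by apply: ge_ereal_sup => _ [f [_ hf] <-]; apply: hf.
  have [hS _] := hbrS th hinS.
  have [_ hnn _] := hFbar _ hS.1.
  by apply: (hu1 th h0).2.
have [h0|h0] := pselect (Theta0 th).
  exfalso; move: hin' => [_]; apply/negP; rewrite -leNgt.
  by apply: ge_ereal_sup => _ [f hf <-]; apply: hF'ia.
have [hb' hmax'] := hbr' th hin'.
have hinS : opts_in P C th FS.
  split; first by exists (br' th); apply: F'S.
  apply: (lt_le_trans hin'.2); apply: ge_ereal_sup => _ [f hf <-].
  apply: le_trans (hmax' f hf) _.
  by apply: ereal_sup_ubound; exists (br' th) => //; apply: F'S.
have [hbS hmaxS] := hbrS th hinS.
have hle : Ex P th (br' th) <= Ex P th (brS th) by apply: hmaxS; apply: F'S.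
rewrite !I1 //.
have [a [b hab]] := haff th h0.
have hmono := (hu1 th h0).1.
have b0 : (0 <= b)%R.
  have := hmono 0%R 1%R (lexx _) ler01; rewrite !hab ?ler01 //.
  by rewrite mulr0 mulr1 addr0 lerDl.
have key : forall f, Fbar f -> \int[P th]_z (u th (f z) * 1)%:E =
    a%:E + b%:E * Ex P th f.
  move=> f hf; have [mf nf intf] := hFbar f hf.
  under eq_integral => z _ do rewrite mulr1 hab // EFinD EFinM.
  rewrite integralD //.
  - rewrite integral_cst // [X in a%:E * X]probability_setT mule1 integralZl //; exact: intf.
  - have -> : (fun=> a%:E) = EFin \o cst a by [].
    exact: finite_measure_integrable_cst.
  - by apply: integrableZl => //; apply: intf.
rewrite key; last exact: hF'sub.
rewrite key; last exact: hbS.1.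
by rewrite leeD2l // lee_wpmul2l // lee_fin.
Qed.
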